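(* Let $n\geq4$ and let $U$ be a monomial. Then $x_{n-1}^2U\in G(J(P_n)^2)$ if and only if $U\in G(J(P_{n-2})^2)$.
   Context: For $m\geq1$, $P_m$ is the path graph on vertices $x_1,\ldots,x_m$ with edges $\{x_i,x_{i+1}\}$; $J(P_m)$ is its cover ideal in a polynomial ring over a field, generated by the monomials $\prod_{x\in C}x$ with $C$ a minimal vertex cover of $P_m$; $G(I)$ denotes the set of minimal monomial generators of a monomial ideal $I$. *)

(* Defs.v *)
From mathcomp Require Import all_boot.
Set Implicit Arguments. Unset Strict Implicit. Unset Printing Implicit Defensive.

(* Ambient polynomial ring k[x_1,...,x_n]; the ordinal i : 'I_n stands for the
   variable x_(i+1).  A monomial is its exponent vector. *)
Definition monomial (n : nat) := {ffun 'I_n -> nat}.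

Definition mon_mul n (u v : monomial n) : monomial n := [ffun i => u i + v i].

Definition mon_dvd n (u v : monomial n) : Prop := forall i, u i <= v i.

Definition mon_of_set n (C : {set 'I_n}) : monomial n :=
  [ffun i => nat_of_bool (i \in C)].

(* C is a vertex cover of the path P_m on x_1..x_m (m <= n):
   C consists of vertices x_1..x_m and meets every edge {x_k, x_(k+1)}. *)
Definition is_cover n (m : nat) (C : {set 'I_n}) : Prop :=
  (forall i, i \in C -> i.+1 <= m) /\
  (forall i j : 'I_n, val j = (val i).+1 -> val j < m -> (i \in C) \/ (j \in C)).

Definition is_min_cover n (m : nat) (C : {set 'I_n}) : Prop :=
  is_cover m C /\ (forall D : {set 'I_n}, D \proper C -> ~ is_cover m D).

(* u is a monomial of J(P_m)^2, i.e. u is divisible by a product x_C1 x_C2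
   of two generators of J(P_m). *)
Definition in_J2 n (m : nat) (u : monomial n) : Prop :=
  exists C1 C2, is_min_cover m C1 /\ is_min_cover m C2 /\
    mon_dvd (mon_mul (mon_of_set C1) (mon_of_set C2)) u.

(* u belongs to G(J(P_m)^2): a monomial of the ideal that is minimal with respect
   to divisibility among the monomials of the ideal. *)
Definition in_G_J2 n (m : nat) (u : monomial n) : Prop :=
  in_J2 m u /\ (forall v, in_J2 m v -> mon_dvd v u -> v = u).

(* x_k^e * u, with k the 1-based index of the variable *)
Definition mul_var_pow n (k e : nat) (u : monomial n) : monomial n :=
  [ffun i => u i + (if (val i).+1 == k then e else 0)].

(* Main.v *)
Require Import Defs.
From mathcomp Require Import all_boot zify.
Set Implicit Arguments. Unset Strict Implicit.

Lemma eq_of_val m (i a : 'I_m) : val i = val a -> i = a.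
Proof. by move=> h; apply/val_inj. Qed.

Lemma cover_ext m (a : 'I_m.+2) (C : {set 'I_m.+2}) :
  val a = m -> is_cover m C -> is_cover m.+2 (a |: C).
Proof.
move=> ha [h1 h2]; split.
  move=> i /setU1P [->|/h1]; rewrite ?ha; lia.
move=> i j hj hjm.
have [jm|jm] := ltnP j m.
  by case: (h2 i j hj jm) => h; [left|right]; apply/setU1P; right.
have [e|e] : val j = m \/ val j = m.+1 by move: (ltn_ord j) hjm jm; rewrite /=; lia.
  by right; apply/setU1P; left; apply: eq_of_val; rewrite e ha.
by left; apply/setU1P; left; apply: eq_of_val; rewrite ha; lia.
Qed.

Lemma cover_restr m (a b : 'I_m.+2) (C : {set 'I_m.+2}) :
  val a = m -> val b = m.+1 -> is_cover m.+2 C -> b \notin C -> is_cover m (C :\ a).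
Proof.
move=> ha hb [h1 h2] bC; split.
  move=> i /setD1P [ia iC].
  have ib : i != b by apply: contraNneq bC => <-.
  have := ltn_ord i.
  have : val i != m by apply: contra ia => /eqP e; apply/eqP/eq_of_val; rewrite e ha.
  have : val i != m.+1 by apply: contra ib => /eqP e; apply/eqP/eq_of_val; rewrite e hb.
  rewrite /=; lia.
move=> i j hj hjm.
case: (h2 i j hj ltac:(lia)) => h; [left|right]; apply/setD1P; split => //.
  by apply/eqP => e; move: hj hjm; rewrite e ha; lia.
by apply/eqP => e; move: hjm; rewrite e ha; lia.
Qed.

Lemma min_notb m (a b : 'I_m.+2) (C : {set 'I_m.+2}) :
  val a = m -> val b = m.+1 -> is_min_cover m.+2 C -> a \in C -> b \notin C.
Proof.
move=> ha hb [[h1 h2] hmin] aC; apply/negP => bC.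
apply: (hmin (C :\ b) (properD1 bC)); split.
  by move=> i /setD1P [_ /h1].
move=> i j hj hjm.
have ab : a != b by apply/eqP => e; move: ha; rewrite e hb; lia.
case: (h2 i j hj hjm) => h.
  left; apply/setD1P; split => //.
  by apply/eqP => e; move: hj hjm; rewrite e hb; lia.
have [e|ne] := eqVneq j b.
  left; have -> : i = a by apply: eq_of_val; move: hj; rewrite e hb ha; lia.
  by apply/setD1P.
by right; apply/setD1P.
Qed.

Lemma min_ext m (a b : 'I_m.+2) (C : {set 'I_m.+2}) :
  val a = m -> val b = m.+1 -> is_min_cover m C -> is_min_cover m.+2 (a |: C).
Proof.
move=> ha hb [hc hmin]; split; first exact: cover_ext.
have bC : b \notin a |: C.
  apply/setU1P => -[e|/(proj1 hc)]; first by move: hb; rewrite e ha; lia.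
  by rewrite hb; lia.
move=> D /properP [sub [x xaC xD]] hD.
have [aD|aD] := boolP (a \in D).
  have bD : b \notin D by apply: contra bC => /(subsetP sub).
  apply: (hmin (D :\ a)); last exact: (cover_restr ha hb hD bD).
  apply/properP; split.
    apply/subsetP => y /setD1P [ya /(subsetP sub) /setU1P [e|//]].
    by rewrite e eqxx in ya.
  exists x; last by apply: contra xD => /setD1P [].
  by case/setU1P: xaC => // e; rewrite e aD in xD.
case: (proj2 hD a b ltac:(rewrite hb ha //) ltac:(rewrite hb //)) => h.
  by rewrite h in aD.
by move: bC; rewrite (subsetP sub _ h).
Qed.

Lemma min_restr m (a b : 'I_m.+2) (C : {set 'I_m.+2}) :
  val a = m -> val b = m.+1 -> is_min_cover m.+2 C -> a \in C -> is_min_cover m (C :\ a).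
Proof.
move=> ha hb hC aC.
have bC := min_notb ha hb hC aC.
split; first exact: (cover_restr ha hb (proj1 hC) bC).
move=> D /properP [sub [x xC xD]] hD.
apply: (proj2 hC (a |: D)); last exact: cover_ext.
apply/properP; split.
  apply/subsetP => y /setU1P [->//|/(subsetP sub) /setD1P []//].
exists x; first by case/setD1P: xC.
by apply/setU1P => -[e|h]; [move: xC; rewrite e setD11|rewrite h in xD].
Qed.

Definition P n (C1 C2 : {set 'I_n}) := mon_mul (mon_of_set C1) (mon_of_set C2).

Lemma PE n (C1 C2 : {set 'I_n}) i : P C1 C2 i = (i \in C1) + (i \in C2).
Proof. by rewrite /P /mon_mul /mon_of_set !ffunE. Qed.

Lemma G_eq m n (u : monomial n) : in_G_J2 m u ->
  exists C1 C2, is_min_cover m C1 /\ is_min_cover m C2 /\ u = P C1 C2.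
Proof.
move=> [[C1 [C2 [h1 [h2 hd]]]] hmin].
exists C1, C2; split => //; split => //.
by apply/esym/hmin => //; exists C1, C2; split => //; split => // i.
Qed.

Lemma dvd_antisym n (u v : monomial n) : mon_dvd u v -> mon_dvd v u -> u = v.
Proof. by move=> h1 h2; apply/ffunP => i; apply/eqP; rewrite eqn_leq h1 h2. Qed.

Lemma mvpE m (a : 'I_m.+2) e (u : monomial m.+2) i : val a = m ->
  mul_var_pow m.+1 e u i = u i + (if i == a then e else 0).
Proof.
move=> ha; rewrite ffunE; congr (_ + _).
have -> : ((val i).+1 == m.+1) = (val i == val a) by rewrite ha eqSS.
by rewrite (inj_eq val_inj).
Qed.

Lemma notin_min m (a : 'I_m.+2) C : val a >= m -> is_min_cover m C -> a \notin C.
Proof.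
move=> ha [[h1 _] _]; apply/negP => /h1; move: ha; rewrite /=; lia.
Qed.

Theorem lemma3p8 (n : nat) (U : monomial n) :
  4 <= n ->
  (in_G_J2 n (mul_var_pow (n - 1) 2 U) <-> in_G_J2 (n - 2) U).
Proof.
case: n U => [|[|m]] U // hn.
have -> : m.+2 - 1 = m.+1 by lia.
have -> : m.+2 - 2 = m by lia.
have am : m < m.+2 by lia.
pose a : 'I_m.+2 := Ordinal am.
pose b : 'I_m.+2 := ord_max.
have ha : val a = m by [].
have hb : val b = m.+1 by [].
have ab : a != b by apply/eqP => e; move: ha; rewrite e hb; lia.
have edge : forall D : {set 'I_m.+2}, is_min_cover m.+2 D -> b \notin D -> a \in D.
  move=> D [[_ h2] _] bD; case: (h2 a b hb ltac:(rewrite hb; lia)) => //.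
  by move=> bD'; rewrite bD' in bD.
split.
- move=> hG; case: (G_eq hG) => C1 [C2 [h1 [h2 hW]]].
  have hWa := congr1 (fun f : monomial m.+2 => f a) hW; rewrite /= (mvpE _ _ _ ha) eqxx PE in hWa.
  have aC1 : a \in C1 by move: hWa; case: (a \in C1); case: (a \in C2) => /=; lia.
  have aC2 : a \in C2 by move: hWa; case: (a \in C1); case: (a \in C2) => /=; lia.
  have Ua : U a = 0 by move: hWa; rewrite aC1 aC2 /=; lia.
  have m1 := min_restr ha hb h1 aC1.
  have m2 := min_restr ha hb h2 aC2.
  have hU : U = P (C1 :\ a) (C2 :\ a).
    apply/ffunP => i; rewrite PE !in_setD1.
    have [->|ne] := eqVneq i a; first by rewrite Ua.
    have := congr1 (fun f : monomial m.+2 => f i) hW; rewrite /= (mvpE _ _ _ ha) (negbTE ne) PE /=.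
    by rewrite addn0.
  split.
    by exists (C1 :\ a), (C2 :\ a); split => //; split => //; rewrite hU => i.
  move=> v [D1 [D2 [hD1 [hD2 hdv]]]] hvU.
  have [hJ hdW] : in_J2 m.+2 (mul_var_pow m.+1 2 v) /\
        mon_dvd (mul_var_pow m.+1 2 v) (mul_var_pow m.+1 2 U).
    split.
      exists (a |: D1), (a |: D2); split; first exact: (min_ext ha hb hD1).
      split; first exact: (min_ext ha hb hD2).
      move=> i; rewrite (mvpE _ _ _ ha) /mon_mul /mon_of_set !ffunE !in_setU1.
      have [->|ne] := eqVneq i a; first by rewrite /= leq_addl.
      by rewrite /= addn0; have := hdv i; rewrite PE.
    by move=> i; rewrite !(mvpE _ _ _ ha) leq_add2r.
  have e := hG.2 _ hJ hdW.
  apply/ffunP => i; have := congr1 (fun f : monomial m.+2 => f i) e; rewrite !(mvpE _ _ _ ha).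
  by move/addIn.
- move=> hG; case: (G_eq hG) => C1 [C2 [h1 [h2 hU]]].
  have aC1 := notin_min (a:=a) (leqnn m) h1.
  have aC2 := notin_min (a:=a) (leqnn m) h2.
  have bC1 := notin_min (a:=b) (leqnSn m) h1.
  have bC2 := notin_min (a:=b) (leqnSn m) h2.
  have hW : mul_var_pow m.+1 2 U = P (a |: C1) (a |: C2).
    apply/ffunP => i; rewrite (mvpE _ _ _ ha) PE !in_setU1 hU PE.
    have [->|ne] := eqVneq i a; first by rewrite (negbTE aC1) (negbTE aC2).
    by rewrite /= addn0.
  have e1 := min_ext ha hb h1.
  have e2 := min_ext ha hb h2.
  split.
    by exists (a |: C1), (a |: C2); split => //; split => //; rewrite hW => i.
  move=> v [D1 [D2 [hD1 [hD2 hdv]]]] hvW.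
  have hdv' : mon_dvd (P D1 D2) v := hdv.
  have hbb : b \notin D1 /\ b \notin D2.
    have := leq_trans (hdv' b) (hvW b).
    rewrite PE hW PE !in_setU1 (negbTE bC1) (negbTE bC2) eq_sym (negbTE ab) /=.
    by case: (b \in D1); case: (b \in D2).
  have aD1 := edge D1 hD1 hbb.1.
  have aD2 := edge D2 hD2 hbb.2.
  have r1 := min_restr ha hb hD1 aD1.
  have r2 := min_restr ha hb hD2 aD2.
  have hdU : mon_dvd (P (D1 :\ a) (D2 :\ a)) U.
    move=> i; rewrite PE !in_setD1.
    have [->|ne] := eqVneq i a; first by [].
    have := leq_trans (hdv' i) (hvW i).
    by rewrite PE (mvpE _ _ _ ha) (negbTE ne) addn0.
  have eU := hG.2 _ (ex_intro _ (D1 :\ a) (ex_intro _ (D2 :\ a) (conj r1 (conj r2 (fun i => leqnn _))))) hdU.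
  apply: dvd_antisym hvW _ => i.
  rewrite (mvpE _ _ _ ha) -eU PE !in_setD1.
  have [->|ne] := eqVneq i a.
    by have := hdv' a; rewrite PE aD1 aD2.
  by rewrite /= addn0; have := hdv' i; rewrite PE.
Qed.
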